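(* Let $G$ be a maximal outerplanar graph of order $n\geq 3$, and let $t$ be the number of vertices of degree $2$ in $G$. Then $\gamma_{\times 2}(G)\leq \lfloor \frac{n+t}{2}\rfloor$. *)

(* Defs.v *)
From mathcomp Require Import all_boot.
Set Implicit Arguments. Unset Strict Implicit. Unset Printing Implicit Defensive.

Section Graphs.
Variable T : finType.

Definition simple_graph (e : rel T) : Prop := symmetric e /\ irreflexive e.

Definition deg (e : rel T) (v : T) : nat := #|[set u | e v u]|.

Definition num_deg2 (e : rel T) : nat := #|[set v | deg e v == 2]|.

Definition cnbhd (e : rel T) (v : T) : {set T} := v |: [set u | e v u].

Definition double_dominating (e : rel T) (S : {set T}) : bool :=
  [forall v, 2 <= #|cnbhd e v :&: S|].

(* double domination number: least size of a double dominating set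
   (default #|T| if none exists, which never happens when there is no
   isolated vertex) *)
Definition double_dom_number (e : rel T) : nat :=
  \big[minn/#|T|]_(S : {set T} | double_dominating e S) #|S|.

(* Placing the vertices in convex position on a circle according to an
   injective labelling f : T -> 'I_#|T| (cyclic order), the chords ab and cd
   cross iff a,b,c,d are pairwise distinct and exactly one of c,d lies
   strictly between a and b. *)
Definition chords_cross (f : T -> 'I_#|T|) (a b c d : T) : bool :=
  let lo := minn (f a) (f b) in
  let hi := maxn (f a) (f b) in
  let inside x := (lo < x < hi) in
  [&& a != b, c != d, a != c, a != d, b != c, b != d &
      inside (f c : nat) != inside (f d : nat)].

(* outerplanar: admits a drawing with all vertices on a circle and edges as
   straight chords, no two of which cross *)
Definition outerplanar (e : rel T) : Prop :=
  exists f : T -> 'I_#|T|, injective f /\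
    forall a b c d, e a b -> e c d -> ~~ chords_cross f a b c d.

Definition add_edge (e : rel T) (u v : T) : rel T :=
  fun x y => e x y || ((x == u) && (y == v)) || ((x == v) && (y == u)).

Definition maximal_outerplanar (e : rel T) : Prop :=
  outerplanar e /\
  forall u v, u != v -> ~~ e u v -> ~ outerplanar (add_edge e u v).

End Graphs.

(* Main.v *)
Require Import Defs.
From mathcomp Require Import all_boot zify.
Set Implicit Arguments. Unset Strict Implicit. Unset Printing Implicit Defensive.
Definition Pi : seq (seq (option nat)) := [::
  [:: Some 2; Some 2; None; None; None; None; None; None; None; Some 2; Some 2; None; None; None; None; None; None; None; Some 2; Some 2; None; None; None; None; None; None; None; Some 2; Some 2; None; None; None; None; None; None; None];
  [:: Some 2; None; None; Some 2; None; None; None; None; None; Some 2; None; None; Some 2; None; None; None; None; None; Some 2; None; None; Some 2; None; None; None; None; None; Some 2; None; None; Some 2; None; None; None; None; None];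
  [:: Some 3; Some 3; Some 3; Some 3; Some 3; Some 3; None; None; None; Some 3; Some 3; Some 3; Some 3; Some 3; Some 3; None; None; None; Some 3; Some 3; Some 3; Some 3; Some 3; Some 3; None; None; None; Some 3; Some 3; Some 3; Some 3; Some 3; Some 3; None; None; None];
  [:: Some 3; Some 3; None; Some 3; Some 3; None; Some 3; Some 3; None; Some 3; Some 3; None; Some 3; Some 3; None; Some 3; Some 3; None; Some 3; Some 3; None; Some 3; Some 3; None; Some 3; Some 3; None; Some 3; Some 3; None; Some 3; Some 3; None; Some 3; Some 3; None];
  [:: None; None; None; None; None; None; None; None; None; Some 2; Some 2; Some 2; None; None; None; None; None; None; Some 2; Some 2; Some 2; None; None; None; None; None; None; Some 2; Some 2; Some 2; None; None; None; None; None; None];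
  [:: None; None; None; None; None; None; None; None; None; Some 2; Some 2; None; Some 2; Some 2; None; None; None; None; None; None; None; None; None; None; None; None; None; Some 2; Some 2; None; Some 2; Some 2; None; None; None; None];
  [:: None; None; None; None; None; None; None; None; None; Some 2; None; None; Some 2; None; None; Some 2; None; None; Some 2; None; None; Some 2; None; None; Some 2; None; None; Some 2; None; None; Some 2; None; None; Some 2; None; None];
  [:: None; None; None; None; None; None; None; None; None; Some 1; Some 1; Some 3; Some 3; Some 3; Some 3; None; None; None; None; None; None; None; None; None; None; None; None; Some 1; Some 1; Some 3; Some 3; Some 3; Some 3; None; None; None];
  [:: None; None; None; None; None; None; None; None; None; Some 3; Some 3; Some 3; Some 3; Some 3; Some 3; Some 3; Some 3; Some 3; None; None; None; None; None; None; None; None; None; Some 1; Some 1; Some 1; Some 1; Some 1; Some 1; Some 3; Some 3; Some 3];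
  [:: None; None; None; None; None; None; None; None; None; Some 3; Some 3; None; Some 3; Some 3; None; None; None; None; Some 3; Some 3; None; Some 3; Some 3; None; None; None; None; Some 1; Some 3; None; Some 3; Some 3; None; None; None; None];
  [:: None; None; None; None; None; None; None; None; None; None; None; None; None; None; None; None; None; None; Some 2; Some 2; None; Some 2; Some 2; None; None; None; None; Some 2; Some 2; None; Some 2; Some 2; None; None; None; None];
  [:: None; None; None; None; None; None; None; None; None; None; None; None; None; None; None; None; None; None; Some 1; Some 3; None; Some 1; Some 3; None; Some 3; Some 3; None; Some 1; Some 3; None; Some 1; Some 3; None; Some 3; Some 3; None];
  [:: None; None; None; None; None; None; None; None; None; None; None; None; None; None; None; None; None; None; Some 3; Some 3; Some 3; Some 3; Some 3; Some 3; Some 3; Some 3; Some 3; Some 1; Some 1; Some 3; Some 1; Some 1; Some 3; Some 1; Some 1; Some 3];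
  [:: None; None; None; None; None; None; None; None; None; None; None; None; None; None; None; None; None; None; None; None; None; None; None; None; None; None; None; Some 1; Some 1; Some 1; Some 1; Some 1; Some 1; Some 1; Some 1; Some 1];
  [:: None; None; None; None; None; None; None; None; None; None; None; None; None; None; None; None; None; None; None; None; None; None; None; None; None; None; None; Some 0; Some 0; Some 2; Some 0; Some 0; Some 2; Some 2; Some 2; Some 2]
].
Definition OFF := 3.
Definition enc (xa xb : bool) (Da Db : nat) := ((xa * 2 + xb) * 3 + Da) * 3 + Db.
Definition EMPTY : seq (option nat) :=
  [seq (if (i %% 9 == 0) then Some OFF else None) | i <- iota 0 36].
Definition Lpairs := (EMPTY, true) :: [seq (p, false) | p <- Pi].
Definition bools := [:: false; true].
Definition cand_ok (p1 p2 : seq (option nat)) (ear : bool) (xa xb : bool) (Da Db Q : nat)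
  (xc : bool) (d1 d2 : nat) :=
  (2 - xc - xa - xb <= d1 + d2) &&
  match nth None p1 (enc xa xc (Da - xc) d1), nth None p2 (enc xc xb d2 (Db - xc)) with
  | Some q1, Some q2 => q1 + q2 + 2 * xc <= Q + OFF + 1 + ear
  | _, _ => false end.
Definition state_ok p1 p2 ear q xa xb Da Db :=
  match nth None q (enc xa xb Da Db) with
  | None => true
  | Some Q => has (fun xc => has (fun d1 => has (fun d2 =>
       cand_ok p1 p2 ear xa xb Da Db Q xc d1 d2) (iota 0 3)) (iota 0 3)) bools
  end.
Definition prof_ok p1 p2 ear q :=
  all (fun xa => all (fun xb => all (fun Da => all (fun Db =>
     state_ok p1 p2 ear q xa xb Da Db) (iota 0 3)) (iota 0 3)) bools) bools.
Definition closure_ok :=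
  all (fun pe1 => all (fun pe2 =>
    has (fun q => prof_ok pe1.1 pe2.1 (pe1.2 && pe2.2) q) Pi) Lpairs) Lpairs.
Definition top_cand (p1 p2 : seq (option nat)) (e1 e2 : bool) (xa xb xc : bool) (d1a d1b d2a d2b : nat) :=
  [&& 2 <= xa + xb + xc + d1a, 2 <= xa + xb + xc + d2b, 2 <= xa + xb + xc + d1b + d2a &
  match nth None p1 (enc xa xc d1a d1b), nth None p2 (enc xc xb d2a d2b) with
  | Some q1, Some q2 => 2 * (xa + xb + xc) + q1 + q2 <= 3 + (e1 && e2) + e1 + e2 + 2 * OFF
  | _, _ => false end].
Definition top_ok :=
  all (fun pe1 => all (fun pe2 =>
    has (fun xa => has (fun xb => has (fun xc => has (fun d1a => has (fun d1b =>
    has (fun d2a => has (fun d2b => top_cand pe1.1 pe2.1 pe1.2 pe2.2 xa xb xc d1a d1b d2a d2b)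
    (iota 0 3)) (iota 0 3)) (iota 0 3)) (iota 0 3)) bools) bools) bools) Lpairs) Lpairs.
Lemma closure_okT : closure_ok. Proof. by vm_compute. Qed.
Lemma top_okT : top_ok. Proof. by vm_compute. Qed.

Definition pcross (p q r s : nat) : bool :=
  [&& p != q, r != s, p != r, p != s, q != r, q != s &
      (minn p q < r < maxn p q) != (minn p q < s < maxn p q)].

Lemma pcross_sym p q r s : pcross p q r s = pcross r s p q.
Proof.
rewrite /pcross.
case: (ltngtP p q) => [h|h|->]; last by rewrite eqxx /= ?andbF.
all: case: (ltngtP r s) => [h'|h'|->]; last by rewrite eqxx /= ?andbF.
all: rewrite ?(minn_idPl (ltnW h)) ?(maxn_idPr (ltnW h)) ?(minn_idPr (ltnW h)) ?(maxn_idPl (ltnW h)).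
all: rewrite ?(minn_idPl (ltnW h')) ?(maxn_idPr (ltnW h')) ?(minn_idPr (ltnW h')) ?(maxn_idPl (ltnW h')).
all: case: (ltngtP p r) => // H1; case: (ltngtP p s) => // H2; case: (ltngtP q r) => // H3; case: (ltngtP q s) => // H4.
all: rewrite ?eqxx ?andbF //=.
all: try lia.
Qed.

Lemma pcross_sw12 p q r s : pcross p q r s = pcross q p r s.
Proof.
rewrite /pcross minnC maxnC.
case: (ltngtP p q) => [h|h|->] //.
all: case: (ltngtP p r) => // H1; case: (ltngtP p s) => // H2; case: (ltngtP q r) => // H3; case: (ltngtP q s) => // H4.
all: rewrite ?eqxx ?andbF //=.
all: try lia.
Qed.

Lemma bigmin_le (I : finType) (P : pred I) (F : I -> nat) x i0 :
  P i0 -> \big[minn/x]_(i | P i) F i <= F i0.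
Proof.
move=> Pi0; have : i0 \in index_enum I := mem_index_enum i0.
elim: (index_enum I) => [//|j r IH]; rewrite inE big_cons => /orP[/eqP<-|/IH h].
  by rewrite Pi0 geq_minl.
by case: (P j) => //; exact: leq_trans (geq_minr _ _) h.
Qed.

Section Main.
Variable T : finType.
Variable e : rel T.
Hypothesis esym : symmetric e.
Hypothesis eirr : irreflexive e.
Variable f : T -> 'I_#|T|.
Hypothesis finj : injective f.
Hypothesis fnc : forall a b c d, e a b -> e c d -> ~~ chords_cross f a b c d.
Hypothesis fmax : forall x y, x != y -> ~~ e x y -> ~ outerplanar (add_edge e x y).
Variable v : nat -> T.
Hypothesis vK : forall x, v (f x) = x.
Hypothesis fv : forall p, p < #|T| -> (f (v p) : nat) = p.

Definition g p q := e (v p) (v q).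

Lemma v_eq p q : p < #|T| -> q < #|T| -> (v p == v q) = (p == q).
Proof. by move=> hp hq; apply/eqP/eqP => [h|->//]; rewrite -(fv hp) -(fv hq) h. Qed.

Lemma gsym p q : g p q = g q p. Proof. by rewrite /g esym. Qed.
Lemma girr p : g p p = false. Proof. by rewrite /g eirr. Qed.

Lemma cross_pos p q r s : p < #|T| -> q < #|T| -> r < #|T| -> s < #|T| ->
  chords_cross f (v p) (v q) (v r) (v s) = pcross p q r s.
Proof. by move=> *; rewrite /chords_cross /pcross /= !fv // !v_eq. Qed.

Lemma nc p q r s : p < #|T| -> q < #|T| -> r < #|T| -> s < #|T| ->
  g p q -> g r s -> ~~ pcross p q r s.
Proof. by move=> *; rewrite -cross_pos //; apply: fnc. Qed.

Lemma nocross_lt p q r s : p < r < q -> (s < p \/ q < s) -> s < #|T| -> q < #|T| ->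
  g p q -> g r s -> False.
Proof.
move=> hr hs sn qn gpq grs.
have hpq : p < q by lia.
have := nc (ltn_trans hpq qn) qn (ltn_trans (proj2 (andP hr)) qn) sn gpq grs.
move/negP; apply; rewrite /pcross (minn_idPl (ltnW hpq)) (maxn_idPr (ltnW hpq)).
have H2 : (p < s < q) = false by apply/negbTE/negP => /andP[]; lia.
rewrite hr H2; repeat (apply/andP; split); try (apply/eqP; lia); done.
Qed.

Lemma mx p q : p < q -> q < #|T| ->
  (forall r s, r < #|T| -> s < #|T| -> g r s -> p < r < q -> (s < p \/ q < s) -> False) ->
  g p q.
Proof.
move=> hpq qn H; case: (boolP (g p q)) => // ngpq; exfalso.
have pn : p < #|T| by lia.
apply: (fmax (x:=v p) (y:=v q)); first by rewrite v_eq // neq_ltn hpq.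
  exact: ngpq.
have key : forall c d, e c d -> ~~ pcross p q (f c) (f d).
  move=> c d ecd; apply/negP => hc.
  have gcd : g (f c) (f d) by rewrite /g !vK.
  move: hc; rewrite /pcross (minn_idPl (ltnW hpq)) (maxn_idPr (ltnW hpq)).
  move=> /and5P[_ hcd hpc hpd /andP[hqc /andP[hqd hin]]].
  have fcn := ltn_ord (f c); have fdn := ltn_ord (f d).
  move: hin; case: (boolP (p < f c < q)) => hc; case: (boolP (p < f d < q)) => hd //= _.
    by apply: (H (f c) (f d)) => //; move: hd; rewrite negb_and -!ltnNge; lia.
  by apply: (H (f d) (f c)) => //; [rewrite gsym | move: hc; rewrite negb_and -!ltnNge; lia].
exists f; split => // a b c d.
have hP := fun x => ltn_ord (f x).
rewrite /add_edge => /orP[/orP[hab|/andP[/eqP-> /eqP->]]|/andP[/eqP-> /eqP->]]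
  /orP[/orP[hcd|/andP[/eqP-> /eqP->]]|/andP[/eqP-> /eqP->]].
- exact: fnc.
- by rewrite -(vK a) -(vK b) cross_pos // pcross_sym key.
- by rewrite -(vK a) -(vK b) cross_pos // pcross_sym pcross_sw12 key.
- by rewrite -(vK c) -(vK d) cross_pos // key.
- by rewrite cross_pos // /pcross !eqxx /= !andbF.
- by rewrite cross_pos // /pcross !eqxx /= !andbF.
- by rewrite -(vK c) -(vK d) cross_pos // pcross_sw12 key.
- by rewrite cross_pos // /pcross !eqxx /= !andbF.
- by rewrite cross_pos // /pcross !eqxx /= !andbF.
Qed.

Lemma apex a b : a.+1 < b -> b < #|T| -> g a b ->
  exists c, [/\ a < c < b, g a c & g c b].
Proof.
move=> hab bn gab.
have ex : exists c, (a < c < b) && g a c.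
  exists a.+1; rewrite leqnn hab /=; apply: mx; [lia|lia|move=> r s _ _ _; lia].
have ub : forall c, (a < c < b) && g a c -> c <= b by move=> c /andP[]; lia.
case: (ex_maxnP ex ub) => k /andP[hk gak] kmax.
exists k; split => //; apply: mx; [lia|lia|].
move=> r s rn sn grs hr [] hs.
- case: (ltngtP s a) => hsa.
  + by apply: (nocross_lt (p:=a) (q:=b) (r:=r) (s:=s)) => //; lia.
  + by apply: (nocross_lt (p:=a) (q:=k) (r:=s) (s:=r)) => //; [lia|lia|lia|rewrite gsym].
  + subst s; have := kmax r; rewrite gsym grs andbT => /(_ ltac:(lia)); lia.
- by apply: (nocross_lt (p:=a) (q:=b) (r:=r) (s:=s)) => //; lia.
Qed.

Lemma deg2_of c a b : c < #|T| -> a < #|T| -> b < #|T| -> a != b -> g c a -> g c b ->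
  (forall q, q < #|T| -> g c q -> (q == a) || (q == b)) -> deg e (v c) == 2.
Proof.
move=> cn an bn hab gca gcb H.
rewrite /deg (_ : [set u | e (v c) u] = [set v a; v b]); first by rewrite cards2 v_eq // hab.
apply/setP => u; rewrite !inE; apply/idP/idP.
  move=> ecu; have := H (f u) (ltn_ord _); rewrite /g vK => /(_ ecu) /orP[] /eqP <-;
  by rewrite vK eqxx ?orbT.
by case/orP => /eqP ->.
Qed.

Lemma ear_apex a c b : a.+1 = c -> c.+1 = b -> b < #|T| -> g a b -> g a c -> g c b ->
  deg e (v c) == 2.
Proof.
move=> h1 h2 bn gab gac gcb.
apply: (deg2_of (a:=a) (b:=b)); [lia|lia|lia|apply/eqP; lia|by rewrite gsym|done|].
move=> q qn gcq.
have qc : q != c by apply: contraTneq gcq => ->; rewrite girr.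
have : ~ (q < a \/ b < q).
  by move=> h; apply: (nocross_lt (p:=a) (q:=b) (r:=c) (s:=q)) => //; lia.
move: qc; lia.
Qed.

Lemma split3 a c b (F : nat -> nat) : a < c -> c < b ->
  \sum_(a.+1 <= u < b) F u = \sum_(a.+1 <= u < c) F u + F c + \sum_(c.+1 <= u < b) F u.
Proof.
move=> hac hcb; rewrite (@big_cat_nat _ _ _ c) //= ?(ltnW hcb) //.
by rewrite (@big_ltn _ _ _ c) // addnA.
Qed.

Definition cnt (S : nat -> bool) a b := \sum_(a.+1 <= u < b) S u.
Definition domc (S : nat -> bool) a b x := \sum_(a.+1 <= u < b) (S u && g x u).
Definition ddc (S : nat -> bool) a b w := \sum_(a.+1 <= u < b) (S u && ((u == w) || g w u)).
Definition tc a b := \sum_(a.+1 <= u < b) (deg e (v u) == 2).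

Definition valid a b (p : seq (option nat)) :=
  forall (xa xb : bool) Da Db Q, Da <= 2 -> Db <= 2 ->
  nth None p (enc xa xb Da Db) = Some Q ->
  exists S : nat -> bool,
  [/\ forall u, S u -> a < u < b,
      2 * cnt S a b + OFF <= (b - a).-1 + tc a b + Q,
      Da <= domc S a b a, Db <= domc S a b b &
      forall w, a < w < b -> 2 <= (xa && g w a) + (xb && g w b) + ddc S a b w].

Lemma valid_empty a : valid a a.+1 EMPTY.
Proof.
move=> xa xb Da Db Q hDa hDb.
have -> : nth None EMPTY (enc xa xb Da Db) = if (Da == 0) && (Db == 0) then Some OFF else None.
  by case: xa; case: xb; case: Da hDa => [|[|[|]]] //; case: Db hDb => [|[|[|]]].
case: ifP => // /andP[/eqP-> /eqP->] [<-].
exists (fun _ => false); split => //.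
- rewrite /cnt big1 //; lia.
- move=> w; lia.
Qed.

Lemma andb_le (x y z : bool) : (x && y) <= (x && (z || y)).
Proof. by case: x; case: y; case: z. Qed.

Lemma valid_comb a c b p1 p2 q (ear : bool) : a < c -> c < b -> g a c -> g c b ->
  (ear -> deg e (v c) == 2) -> valid a c p1 -> valid c b p2 -> prof_ok p1 p2 ear q ->
  valid a b q.
Proof.
move=> hac hcb gac gcb hear V1 V2 hok xa xb Da Db Q hDa hDb hQ.
have memb (x : bool) : x \in bools by case: x.
have memi (x : nat) : x <= 2 -> x \in iota 0 3 by rewrite mem_iota; lia.
move: hok => /allP/(_ xa (memb xa)) /allP/(_ xb (memb xb)) /allP/(_ Da (memi _ hDa))
  /allP/(_ Db (memi _ hDb)).
rewrite /state_ok hQ => /hasP[xc _ /hasP[d1 hd1 /hasP[d2 hd2]]].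
rewrite /cand_ok => /andP[hneed].
case E1: (nth None p1 _) => [q1|] //; case E2: (nth None p2 _) => [q2|] // hcost.
have d1le : d1 <= 2 by move: hd1; rewrite mem_iota; lia.
have d2le : d2 <= 2 by move: hd2; rewrite mem_iota; lia.
have [S1 [sup1 cost1 da1 db1 dd1]] := V1 _ _ _ _ _ (leq_trans (leq_subr _ _) hDa) d1le E1.
have [S2 [sup2 cost2 da2 db2 dd2]] := V2 _ _ _ _ _ d2le (leq_trans (leq_subr _ _) hDb) E2.
pose S u := if u < c then S1 u else if u == c then xc else S2 u.
have sumS (H : bool -> nat -> nat) :
    \sum_(a.+1 <= u < b) H (S u) u =
    \sum_(a.+1 <= u < c) H (S1 u) u + H xc c + \sum_(c.+1 <= u < b) H (S2 u) u.
  rewrite (split3 _ hac hcb); congr (_ + _ + _).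
  - by apply: eq_big_nat => u hu; rewrite /S ifT //; clear -hu; lia.
  - by rewrite /S ltnn eqxx.
  - apply: eq_big_nat => u hu; rewrite /S ifF; last (clear -hu; lia).
    by rewrite ifF //; apply/eqP; clear -hu; lia.
have gca : g c a by rewrite gsym.
have gbc : g b c by rewrite gsym.
exists S; split.
- move=> u; rewrite /S; case: ifP => hu; first by move/sup1; clear -hcb; lia.
  case: ifP => [/eqP -> _|hu2]; first (clear -hac hcb; lia).
  by move/sup2; clear -hac; lia.
- rewrite /cnt (sumS (fun b _ => nat_of_bool b)) /=.
  have et : tc a b = tc a c + (deg e (v c) == 2) + tc c b by rewrite /tc (split3 _ hac hcb).
  have eb : ear <= (deg e (v c) == 2) by move: hear; case: (ear) => // /(_ isT) ->.
  move: cost1 cost2 hcost eb; rewrite /cnt et; clear -hac hcb; lia.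
- rewrite /domc (sumS (fun b u => b && g a u)) /= gac andbT.
  move: da1; rewrite /domc; clear; lia.
- rewrite /domc (sumS (fun x u => x && g b u)) /= gbc andbT.
  move: db2; rewrite /domc; clear; lia.
- move=> w hw; rewrite /ddc (sumS (fun b u => b && ((u == w) || g w u))) /=.
  case: (ltngtP w c) => hwc.
  + have := dd1 w ltac:(clear -hw hwc; lia); rewrite /ddc.
    have := andb_le xc (g w c) (c == w); clear; lia.
  + have := dd2 w ltac:(clear -hw hwc; lia); rewrite /ddc.
    have := andb_le xc (g w c) (c == w); clear; lia.
  + subst w; rewrite gca gcb /=.
    have l1 : domc S1 a c c <= \sum_(a.+1 <= u < c) (S1 u && ((u == c) || g c u)).
      by apply: leq_sum => u _; apply: andb_le.
    have l2 : domc S2 c b c <= \sum_(c.+1 <= u < b) (S2 u && ((u == c) || g c u)).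
      by apply: leq_sum => u _; apply: andb_le.
    move: hneed db1 da2 l1 l2; clear; case: xc; case: xa; case: xb => /=; rewrite ?eqxx /=; lia.
Qed.

Lemma poly_ok k : forall a b, b - a <= k -> a < b -> b < #|T| -> g a b ->
  exists p, valid a b p /\ (p, a.+1 == b) \in Lpairs.
Proof.
elim: k => [|k IH] a b hk hab bn gab; first lia.
case: (eqVneq a.+1 b) => [<-|hne].
  by exists EMPTY; split; [exact: valid_empty | idtac]; rewrite ?eqxx /Lpairs ?mem_head/=.
have hab2 : a.+1 < b by rewrite ltn_neqAle hne hab.
have [c [/andP[hac hcb] gac gcb]] := apex hab2 bn gab.
have [p1 [V1 L1]] := IH a c ltac:(lia) hac ltac:(lia) gac.
have [p2 [V2 L2]] := IH c b ltac:(lia) hcb bn gcb.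
have := closure_okT; move=> /allP/(_ _ L1) /allP/(_ _ L2) /hasP[q qin hq].
exists q; split.
  apply: (valid_comb hac hcb gac gcb _ V1 V2 hq) => /= /andP[/eqP h1 /eqP h2].
  exact: ear_apex h1 h2 bn gab gac gcb.
rewrite /Lpairs inE; apply/orP; right; apply/mapP; exists q => //.
Qed.

Lemma final : 2 < #|T| -> exists Sf : nat -> bool,
  (forall w, w < #|T| -> 2 <= \sum_(0 <= p < #|T|) (Sf p && ((p == w) || g w p))) /\
  2 * \sum_(0 <= p < #|T|) Sf p <= #|T| + \sum_(0 <= p < #|T|) (deg e (v p) == 2).
Proof.
move=> n3.
have [N hN] : {N | #|T| = N.+1} by exists #|T|.-1; rewrite prednK // (leq_trans _ n3).
have Nn : N < #|T| by rewrite hN.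
have h1N : 0.+1 < N by move: n3; rewrite hN.
have gN : g 0 N.
  by apply: mx => //; [clear -h1N; lia | move=> r s rn sn _ hr []; clear -sn hN; lia].
have [c [/andP[h0c hcN] g0c gcN]] := apex h1N Nn gN.
have cn : c < #|T| by clear -hcN Nn; lia.
have [p1 [V1 L1]] := @poly_ok c 0 c ltac:(clear; lia) h0c cn g0c.
have [p2 [V2 L2]] := @poly_ok (N - c) c N (leqnn _) hcN Nn gcN.
have := top_okT; move=> /allP/(_ _ L1) /allP/(_ _ L2).
case/hasP => xa _ /hasP[xb _ /hasP[xc _ /hasP[d1a h1 /hasP[d1b h2 /hasP[d2a h3 /hasP[d2b h4]]]]]].
rewrite /top_cand /= => /and4P[c1 c2 c3].
case E1: (nth None p1 _) => [q1|] //; case E2: (nth None p2 _) => [q2|] // hcost.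
have le2 x : x \in iota 0 3 -> x <= 2 by rewrite mem_iota; clear; lia.
have [S1 [sup1 cost1 da1 db1 dd1]] := V1 _ _ _ _ _ (le2 _ h1) (le2 _ h2) E1.
have [S2 [sup2 cost2 da2 db2 dd2]] := V2 _ _ _ _ _ (le2 _ h3) (le2 _ h4) E2.
pose Sf p := if p == 0 then xa else if p < c then S1 p else if p == c then xc
             else if p < N then S2 p else xb.
have splitS (F : nat -> nat) : \sum_(0 <= p < #|T|) F p =
    F 0 + \sum_(1 <= p < c) F p + F c + \sum_(c.+1 <= p < N) F p + F N.
  rewrite hN big_nat_recr //= big_ltn; last by clear -h1N; lia.
  by rewrite (split3 _ h0c hcN) !addnA.
have sumS (H : bool -> nat -> nat) : \sum_(0 <= p < #|T|) H (Sf p) p =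
    H xa 0 + \sum_(1 <= p < c) H (S1 p) p + H xc c + \sum_(c.+1 <= p < N) H (S2 p) p + H xb N.
  rewrite splitS; congr (_ + _ + _ + _ + _).

  - apply: eq_big_nat => p hp.
    have e1 : (p == 0) = false by apply/eqP; clear -hp; lia.
    have e2 : (p < c) = true by clear -hp; lia.
    by rewrite /Sf e1 e2.
  - have e1 : (c == 0) = false by apply/eqP; clear -h0c; lia.
    by rewrite /Sf e1 ltnn eqxx.
  - apply: eq_big_nat => p hp.
    have e1 : (p == 0) = false by apply/eqP; clear -hp; lia.
    have e2 : (p < c) = false by clear -hp; lia.
    have e3 : (p == c) = false by apply/eqP; clear -hp; lia.
    have e4 : (p < N) = true by clear -hp; lia.
    by rewrite /Sf e1 e2 e3 e4.
  - have e1 : (N == 0) = false by apply/eqP; clear -h1N; lia.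
    have e2 : (N < c) = false by clear -hcN; lia.
    have e3 : (N == c) = false by apply/eqP; clear -hcN; lia.
    by rewrite /Sf e1 e2 e3 ltnn.
have gc0 : g c 0 by rewrite gsym.
have gN0 : g N 0 by rewrite gsym.
have gNc : g N c by rewrite gsym.
exists Sf; split.
- move=> w wn; have wN : w <= N by move: wn; rewrite hN.
  rewrite (sumS (fun x p => x && ((p == w) || g w p))) /=.
  case: (ltngtP w c) => hwc.
  + case: (eqVneq w 0) => [->|hw0].
    * have l1 : domc S1 0 c 0 <= \sum_(1 <= u < c) (S1 u && ((u == 0) || g 0 u)).
        by apply: leq_sum => u _; apply: andb_le.
      rewrite g0c gN !orbT !andbT ?eqxx /=.
      move: c1 da1 l1; clear; lia.
    * have := dd1 w ltac:(clear -hw0 hwc; lia); rewrite /ddc.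
      have := andb_le xc (g w c) (c == w); have := andb_le xa (g w 0) (0 == w).
      clear; lia.
  + case: (eqVneq w N) => [->|hwN].
    * have l2 : domc S2 c N N <= \sum_(c.+1 <= u < N) (S2 u && ((u == N) || g N u)).
        by apply: leq_sum => u _; apply: andb_le.
      rewrite gN0 gNc !orbT !andbT ?eqxx /=.
      move: c2 da1 db2 l2; clear; lia.
    * move/eqP: hwN => hwN.
      have hw : c < w < N by clear -hwN hwc wN; lia.
      have := dd2 w hw; rewrite /ddc.
      have := andb_le xc (g w c) (c == w); have := andb_le xb (g w N) (N == w).
      clear; lia.
  + subst w; rewrite gc0 gcN !orbT !andbT ?eqxx /=.
    have l1 : domc S1 0 c c <= \sum_(1 <= u < c) (S1 u && ((u == c) || g c u)).
      by apply: leq_sum => u _; apply: andb_le.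
    have l2 : domc S2 c N c <= \sum_(c.+1 <= u < N) (S2 u && ((u == c) || g c u)).
      by apply: leq_sum => u _; apply: andb_le.
    move: c3 db1 da2 l1 l2; clear; lia.
- rewrite (sumS (fun x _ => nat_of_bool x)) splitS /=.
  have E0 : (0.+1 == c) <= (deg e (v 0) == 2).
    case: eqP => //= hc1; subst c.
    suff -> : deg e (v 0) == 2 by [].
    apply: (deg2_of (a:=1) (b:=N)) => //; [exact: (leq_ltn_trans (leq0n N) Nn)|by apply/eqP; clear -h1N; lia|].
    move=> q qn gq.
    have q0 : q != 0 by apply: contraTneq gq => ->; rewrite girr.
    have : ~ (1 < q < N).
      move=> hq; apply: (nocross_lt (p:=1) (q:=N) (r:=q) (s:=0)) => //; [by left | exact: (leq_ltn_trans (leq0n N) Nn) | by rewrite gsym].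
    have q0' : q <> 0 :> nat by apply/eqP.
    move: q0' qn hN; clear; lia.
  have EN : (c.+1 == N) <= (deg e (v N) == 2).
    case: eqP => //= hcN1.
    suff -> : deg e (v N) == 2 by [].
    apply: (deg2_of (a:=0) (b:=c)) => //; [exact: (leq_ltn_trans (leq0n N) Nn)|by apply/eqP; clear -h0c; lia|].
    move=> q qn gq.
    have qN : q != N by apply: contraTneq gq => ->; rewrite girr.
    have : ~ (0 < q < c).
      move=> hq; apply: (nocross_lt (p:=0) (q:=c) (r:=q) (s:=N)) => //; [by right | by rewrite gsym].
    have qN' : q <> N :> nat by apply/eqP.
    move: qN' qn hN hcN1; clear; lia.
  have Ec : ((0.+1 == c) && (c.+1 == N)) <= (deg e (v c) == 2).
    case: eqP => //= h01; case: eqP => //= hcN1.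
    by rewrite (ear_apex h01 hcN1 Nn gN g0c gcN).
  have K1 : 2 * cnt S1 0 c + OFF <= c.-1 + tc 0 c + q1 by move: cost1; rewrite subn0.
  have K2 : 2 * cnt S2 c N + OFF <= (N - c).-1 + tc c N + q2 := cost2.
  suff H : 2 * (xa + cnt S1 0 c + xc + cnt S2 c N + xb) <=
    N.+1 + ((deg e (v 0) == 2) + tc 0 c + (deg e (v c) == 2) + tc c N + (deg e (v N) == 2)).
    by rewrite -hN in H; exact: H.
  move: hcost K1 K2 E0 EN Ec; move: (0.+1 == c) (c.+1 == N) => b1 b2.
  move: (cnt S1 0 c) (cnt S2 c N) (tc 0 c) (tc c N) => A B C D.
  move: h0c hcN; clear; rewrite /OFF; case: b1; case: b2; case: xa; case: xb; case: xc => /=; lia.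
Qed.

Lemma card_pos (P : T -> bool) : #|[set x | P x]| = \sum_(0 <= p < #|T|) P (v p).
Proof.
rewrite -sum1_card big_mkcond /=.
rewrite (reindex (fun i : 'I_#|T| => v i)) /=; last first.
  apply: onW_bij; exists f => [i|x]; [apply: val_inj; rewrite /= fv // | exact: vK].
rewrite big_mkord; apply: eq_bigr => i _; rewrite inE; by case: (P _).
Qed.
End Main.

Theorem theorem3p5 (T : finType) (e : rel T) :
  simple_graph e -> maximal_outerplanar e -> 3 <= #|T| ->
  double_dom_number e <= (#|T| + num_deg2 e) %/ 2.
Proof.
move=> [esym eirr] [[f [finj fnc]] fmax] n3.
have [x0 _] : exists x0 : T, true.
  by case/card_gt0P: (leq_trans (isT : 0 < 3) n3) => x _; exists x.
have fb : bijective f.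
  by apply: inj_card_bij => //; exact: eq_leq (card_ord _).
case: fb => f' fK f'K.
pose v (p : nat) : T := if (insub p : option 'I_#|T|) is Some i then f' i else x0.
have vK : forall x, v (f x) = x by move=> x; rewrite /v valK fK.
have fv : forall p, p < #|T| -> (f (v p) : nat) = p.
  by move=> p hp; rewrite /v; case: insubP => [i _ <-|]; [rewrite f'K | rewrite hp].
have [Sf [hdd hcost]] := final esym eirr finj fnc fmax vK fv n3.
pose ST := [set x | Sf (f x)].
have dd : double_dominating e ST.
  apply/forallP => x.
  have -> : #|cnbhd e x :&: ST| = \sum_(0 <= p < #|T|) (Sf p && ((p == f x) || g e v (f x) p)).
    rewrite (_ : cnbhd e x :&: ST = [set u | ((u == x) || e x u) && Sf (f u)]); last first.
      by apply/setP => u; rewrite !inE.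
    rewrite (card_pos vK fv); apply: eq_big_nat => p /andP[_ hp].
    by rewrite fv // -{1}(vK x) (v_eq fv) // /g vK andbC.
  exact: hdd.
have le1 : double_dom_number e <= #|ST| by rewrite /double_dom_number; exact: (bigmin_le (fun S : {set T} => #|S|) #|T| dd).
have hST : #|ST| = \sum_(0 <= p < #|T|) Sf p.
  rewrite (card_pos vK fv); apply: eq_big_nat => p /andP[_ hp]; by rewrite fv.
have ht : num_deg2 e = \sum_(0 <= p < #|T|) (deg e (v p) == 2) by rewrite /num_deg2 (card_pos vK fv).
apply: (leq_trans le1); rewrite leq_divRL // hST ht mulnC; exact: hcost.
Qed.
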